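(* Let $\Gamma$ be an abelian group of order $2n+1\geq 3$. There exists a $\mathrm{M}^0_{\Gamma^*}(2,n;n,2)$ if and only if $\Gamma\notin\{\mathbb Z_3,\mathbb Z_5,\mathbb Z_3\oplus\mathbb Z_3\}$.
   Context: For an abelian group $\Gamma$ and $\Omega\subseteq\Gamma$, a zero-sum magic partially filled array $\mathrm{M}^0_\Omega(m,n;s,k)$ is an $m\times n$ array, some cells of which may be empty, with entries in $\Omega$ in which every element of $\Omega$ appears exactly once, each row has exactly $s$ and each column exactly $k$ filled cells, and all row and column sums equal $0_\Gamma$. In particular $\mathrm{M}^0_\Omega(2,n;n,2)$ is a $2\times n$ array with no empty cells. $\Gamma^*=\Gamma\setminus\{0_\Gamma\}$; $\mathbb Z_N$ is the cyclic group of order $N$. *)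

(* Defs.v *)
From HB Require Import structures.
From mathcomp Require Import all_boot all_order all_algebra.
Set Implicit Arguments. Unset Strict Implicit. Unset Printing Implicit Defensive.
Import GRing.Theory.
Local Open Scope ring_scope.

(* A partially filled m x n array with entries in G: [None] = empty cell. *)
Definition zs_magic_pfa (G : finZmodType) (Omega : {set G}) (m n s k : nat)
    (A : 'M[option G]_(m, n)) : Prop :=
  (forall i j x, A i j = Some x -> x \in Omega) /\
      (forall x, x \in Omega ->
         #|[set p : 'I_m * 'I_n | A p.1 p.2 == Some x]| = 1%N) /\
      (forall i, #|[set j | A i j != None]| = s) /\
      (forall j, #|[set i | A i j != None]| = k) /\
      (forall i, \sum_(j < n) odflt 0 (A i j) = 0) /\
    (forall j, \sum_(i < m) odflt 0 (A i j) = 0).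

Definition zmod_iso (G : finZmodType) (H : zmodType) : Prop :=
  exists f : G -> H, bijective f /\ {morph f : x y / x + y}.

Arguments zs_magic_pfa G Omega m n s k A : clear implicits.

(* Main.v *)
Require Import Defs.
From HB Require Import structures.
From mathcomp Require Import all_boot all_order all_fingroup all_solvable all_algebra.
From mathcomp Require Import zify ring.
Set Implicit Arguments. Unset Strict Implicit. Unset Printing Implicit Defensive.
Import GRing.Theory FinRing.Theory.
Local Open Scope ring_scope.

Definition hs (G : finZmodType) (S : {set G}) :=
  (0 \notin S) /\ forall x : G, x != 0 -> (x \in S) = (-x \notin S).
Definition zs (G : finZmodType) (S : {set G}) := \sum_(x in S) x = 0.

Lemma dbl0 (G : finZmodType) : odd #|G| -> forall y : G, y + y = 0 -> y = 0.
Proof.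
move=> oddG y yy.
have h1 : (#[y]%g %| 2)%N.
  by rewrite order_dvdn expgS expg1 zmodMgE yy.
have h2 : (#[y]%g %| #|[set: G]|)%N by apply: order_dvdG; rewrite inE.
rewrite cardsT in h2.
have : (#[y]%g %| gcdn 2 #|G|)%N by rewrite dvdn_gcd h1 h2.
have -> : gcdn 2 #|G| = 1%N.
  by apply/eqP; rewrite -/(coprime 2 _) coprime2n oddG.
rewrite dvdn1 => /eqP o1.
by apply/eqP; rewrite -order_eq1 o1.
Qed.

Lemma hs_card (G : finZmodType) (S : {set G}) : hs S -> #|G| = (#|S| * 2).+1.
Proof.
move=> [S0 HS].
have hC : ~: S = 0 |: [set - x | x in S].
  apply/setP=> x; rewrite !inE.
  case: (eqVneq x 0) => [->|nx] //=.
  rewrite HS // negbK; apply/idP/imsetP => [h|[y yS ->]].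
    by exists (- x); rewrite ?opprK.
  by rewrite opprK.
have := cardsC S; rewrite hC cardsU1 card_imset; last exact: oppr_inj.
have -> : (0 : G) \notin [set - x | x in S].
  apply/imsetP=> [[y yS]] /eqP; rewrite eq_sym oppr_eq0 => /eqP y0.
  by move: S0; rewrite -y0 yS.
move=> <-; by rewrite /= add1n addnS muln2 addnn.
Qed.

Definition i0 : 'I_2 := ord0.
Definition i1 : 'I_2 := lift ord0 ord0.
Lemma I2P (i : 'I_2) : i = i0 \/ i = i1.
Proof. by case: i => [[|[|m]] H]; [left|right|]; try apply: val_inj. Qed.
Lemma i01 : i0 != i1. Proof. by []. Qed.

Lemma arr_hs (G : finZmodType) n (A : 'M[option G]_(2,n)) :
  #|G| = (2*n+1)%N -> zs_magic_pfa G [set x : G | x != 0] 2 n n 2 A ->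
  exists S : {set G}, hs S /\ zs S.
Proof.
move=> cG [Hom [Hu [Hr [Hc [Hrs Hcs]]]]].
have allS : forall i j, A i j != None.
  move=> i j; have h := Hr i.
  have : [set j | A i j != None] = setT.
    by apply/eqP; rewrite eqEcard subsetT cardsT card_ord h leqnn.
  by move/setP/(_ j); rewrite !inE.
pose v i j := odflt 0 (A i j).
have Av : forall i j, A i j = Some (v i j).
  by move=> i j; rewrite /v; case: (A i j) (allS i j).
have v0 : forall i j, v i j != 0.
  by move=> i j; have := Hom i j (v i j) (Av i j); rewrite inE.
have uq : forall i j i' j', v i j = v i' j' -> i = i' /\ j = j'.
  move=> i j i' j' e; have := Hu (v i j); rewrite inE v0 => /(_ isT) /eqP /cards1P [p hp].
  have h1 : (i,j) \in [set p | A p.1 p.2 == Some (v i j)] by rewrite inE Av.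
  have h2 : (i',j') \in [set p | A p.1 p.2 == Some (v i j)] by rewrite inE Av e.
  rewrite hp !inE in h1 h2; move/eqP: h1 => h1; move/eqP: h2.
  by rewrite -h1 => -[] -> ->.
have col : forall j, v i1 j = - v i0 j.
  move=> j; have := Hcs j; rewrite !big_ord_recl big_ord0 addr0 -/(v _ j) -/(v _ j).
  by move=> h; apply/eqP; rewrite -addr_eq0 addrC; apply/eqP; exact: h.
pose S := [set v i0 j | j : 'I_n].
exists S; split; [split|].
- apply/imsetP => [[j _ e]]; by move: (v0 i0 j); rewrite -e eqxx.
- move=> x nx; have := Hu x; rewrite inE nx => /(_ isT) /eqP /cards1P [[i j] hp].
  have : (i,j) \in [set p | A p.1 p.2 == Some x] by rewrite hp inE.
  rewrite inE /= Av => /eqP [ex].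
  case: (I2P i) ex => -> ex.
  + have -> : x \in S by apply/imsetP; exists j.
    apply/esym/negP => /imsetP [j' _ e'].
    have := uq i0 j' i1 j; rewrite col ex -e' => /(_ erefl) [/eqP].
    by rewrite (negbTE i01).
  + have -> : - x \in S by apply/imsetP; exists j => //; rewrite -ex col opprK.
    apply/negbTE/negP => /imsetP [j' _ e'].
    have := uq i0 j' i1 j; rewrite ex -e' => /(_ erefl) [/eqP] .
    by rewrite (negbTE i01).
- rewrite /zs big_imset /=; last by move=> j j' _ _ /uq [].
  by have := Hrs i0.
Qed.

Lemma hs_arr (G : finZmodType) (S : {set G}) : hs S -> zs S ->
  exists A : 'M[option G]_(2,#|S|),
    zs_magic_pfa G [set x | x != 0] 2 #|S| #|S| 2 A.
Proof.
move=> [S0 HS] zS.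
pose e (j : 'I_#|S|) := enum_val j.
have eS : forall j, e j \in S by move=> j; apply: enum_valP.
have e0 : forall j, e j != 0 by move=> j; apply/eqP => h; move: S0; rewrite -h eS.
have einj : injective e by apply: enum_val_inj.
have sume : \sum_(j < #|S|) e j = 0.
  by move: zS; rewrite /zs (big_enum_val (fun x : G => x)).
exists (\matrix_(i, j) Some (if i == i0 then e j else - e j)).
split; [|split; [|split; [|split; [|split]]]].
- move=> i j x; rewrite mxE => -[<-]; rewrite inE.
  by case: ifP => _; rewrite ?oppr_eq0 e0.
- move=> x; rewrite inE => nx; apply/eqP/cards1P.
  case xS: (x \in S).
  + exists (i0, enum_rank_in xS x); apply/setP => -[i j]; rewrite !inE mxE /=.
    case: (I2P i) => ->; rewrite /= ?eqxx.
    * rewrite xpair_eqE eqxx /=.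
      apply/eqP/eqP => [[ex]|->]; last by rewrite /e enum_rankK_in.
      by apply: einj; rewrite ex /e enum_rankK_in.
    * rewrite xpair_eqE (eq_sym i1 i0) (negbTE (i01)) /=.
      apply/negP => /eqP [ex]; move: (HS x nx); rewrite xS -ex opprK eS //.
  + have nxS : - x \in S by move: (HS x nx); rewrite xS => /esym/negbFE.
    exists (i1, enum_rank_in nxS (- x)); apply/setP => -[i j]; rewrite !inE mxE /=.
    case: (I2P i) => ->; rewrite /=.
    * rewrite xpair_eqE (negbTE (i01)) /=.
      apply/negP => /eqP [ex]; move: xS; rewrite -ex eS //.
    * rewrite xpair_eqE eqxx /=.
      apply/eqP/eqP => [[ex]|->]; last by rewrite /e enum_rankK_in // opprK.
      by apply: einj; rewrite /e enum_rankK_in // -ex opprK.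
- move=> i; rewrite (_ : [set j | _] = setT) ?cardsT ?card_ord //.
  by apply/setP => j; rewrite !inE mxE.
- move=> j; rewrite (_ : [set i | _] = setT) ?cardsT ?card_ord //.
  by apply/setP => i; rewrite !inE mxE.
- move=> i; under eq_bigr do rewrite mxE /=.
  case: (I2P i) => -> /=; first by [].
  by rewrite sumrN sume oppr0.
- move=> j; rewrite !big_ord_recl big_ord0 !mxE /=.
  by rewrite addr0 subrr.
Qed.

Lemma morph0 (G K : zmodType) (f : G -> K) : {morph f : x y / x + y} -> f 0 = 0.
Proof. by move=> fD; apply: (@addrI _ (f 0)); rewrite -fD !addr0. Qed.
Lemma morphN (G K : zmodType) (f : G -> K) : {morph f : x y / x + y} ->
  forall x, f (- x) = - f x.
Proof.
move=> fD x; apply: (@addrI _ (f x)); rewrite -fD !subrr; exact: morph0 fD.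
Qed.
Lemma morph_sum (G K : zmodType) (f : G -> K) (I : finType) (P : pred I) F :
  {morph f : x y / x + y} -> f (\sum_(i | P i) F i) = \sum_(i | P i) f (F i).
Proof. by move=> fD; apply: (big_morph f fD (morph0 fD)). Qed.

Lemma hs_transport (G K : finZmodType) (f : G -> K) (S : {set G}) :
  bijective f -> {morph f : x y / x + y} -> hs S -> zs S ->
  hs (f @: S) /\ zs (f @: S).
Proof.
move=> fb fD [S0 HS] zS; have finj := bij_inj fb.
have f0 := morph0 fD; have fN := morphN fD.
have memf : forall x, (f x \in f @: S) = (x \in S) by move=> x; rewrite mem_imset.
split; [split|].
- by rewrite -f0 memf.
- case: fb => g fg gf x nx; rewrite -[x]gf -fN !memf; apply: HS.
  by apply: contra nx => /eqP h; rewrite -[x]gf h f0.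
- rewrite /zs big_imset /=; last by move=> ? ? _ _; apply: finj.
  by rewrite -morph_sum // zS f0.
Qed.

Lemma sum_hs_reps (K : finZmodType) (S : {set K}) (r : seq K) : hs S -> uniq r ->
  0 \notin r -> (forall x, x != 0 -> (x \in r) = (- x \notin r)) ->
  \sum_(x in S) x = \sum_(y <- r) (if y \in S then y else - y).
Proof.
move=> [S0 HS] ur r0 Hr.
pose f y := if y \in S then y else - y.
have nz : forall y, y \in r -> y != 0 by move=> y yr; apply: contra r0 => /eqP <-.
have fi : {in r &, injective f}.
  move=> y y' yr y'r; rewrite /f.
  case yS: (y \in S); case y'S: (y' \in S) => // e.
  - by move: (Hr _ (nz _ y'r)); rewrite y'r -e yr.
  - by move: (Hr _ (nz _ yr)); rewrite yr e y'r.
  - exact: oppr_inj.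
have memS : forall x, (x \in S) = (x \in map f r).
  move=> x; apply/idP/mapP.
  - move=> xS; have nx : x != 0 by apply: contra S0 => /eqP <-.
    case xr: (x \in r); first by exists x => //; rewrite /f xS.
    exists (- x); first by move: (Hr x nx); rewrite xr => /esym/negbFE.
    have : - x \notin S by rewrite -HS.
    by rewrite /f => /negbTE ->; rewrite opprK.
  - move=> [y yr ->]; rewrite /f; case yS: (y \in S) => //.
    by have := HS y (nz y yr); rewrite yS => /esym/negbFE.
rewrite (eq_bigl (mem (map f r))) => [|x]; last by rewrite /= memS.
by rewrite -big_uniq ?map_inj_in_uniq // big_map.
Qed.

Lemma Z3_ind (P : 'Z_3 -> Prop) : P (inZp 0) -> P (inZp 1) -> P (inZp 2) -> forall x, P x.
Proof.
move=> P0 P1 P2 [[|[|[|m]]] H] //.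
- by rewrite (_ : Ordinal H = inZp 0) //; apply: val_inj.
- by rewrite (_ : Ordinal H = inZp 1) //; apply: val_inj.
- by rewrite (_ : Ordinal H = inZp 2) //; apply: val_inj.
Qed.

Lemma Z5_ind (P : 'Z_5 -> Prop) : P (inZp 0) -> P (inZp 1) -> P (inZp 2) ->
  P (inZp 3) -> P (inZp 4) -> forall x, P x.
Proof.
move=> P0 P1 P2 P3 P4 [[|[|[|[|[|[|m]]]]]] H] //.
- by rewrite (_ : Ordinal H = inZp 0) //; apply: val_inj.
- by rewrite (_ : Ordinal H = inZp 1) //; apply: val_inj.
- by rewrite (_ : Ordinal H = inZp 2) //; apply: val_inj.
- by rewrite (_ : Ordinal H = inZp 3) //; apply: val_inj.
- by rewrite (_ : Ordinal H = inZp 4) //; apply: val_inj.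
Qed.

Definition K2 := ('Z_3 * 'Z_3)%type.
HB.instance Definition _ := GRing.Zmodule.on K2.
HB.instance Definition _ := Finite.on K2.

Definition e2 (a b : nat) : K2 := (inZp a, inZp b).
Definition r2 : seq K2 := [:: e2 1 0; e2 0 1; e2 1 1; e2 1 2].

Lemma no_hs33 (S : {set K2}) : hs S -> ~ zs S.
Proof.
move=> hS; rewrite /zs (sum_hs_reps (r := r2) hS).
- rewrite !big_cons big_nil.
  by do 4 case: (_ \in S); move/eqP; vm_compute.
- by vm_compute.
- by vm_compute.
- case=> a b; elim/Z3_ind: a; elim/Z3_ind: b; by vm_compute.
Qed.

Lemma no_hs_card3 (G : finZmodType) (S : {set G}) : #|G| = 3%N -> hs S -> ~ zs S.
Proof.
move=> cG hS; have := hs_card hS; rewrite cG => -[c1].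
have /cards1P [x Sx] : #|S| == 1%N.
  by rewrite -(eqn_pmul2r (isT : (0 < 2)%N)) mul1n; apply/eqP; exact: esym c1.
case: hS => S0 _; rewrite /zs Sx big_set1 => x0.
by move: S0; rewrite Sx -x0 set11.
Qed.

Lemma no_hs_card5 (G : finZmodType) (S : {set G}) : #|G| = 5%N -> hs S -> ~ zs S.
Proof.
move=> cG hS; have := hs_card hS; rewrite cG => -[c1].
have /cards2P [x [y [nxy Sxy]]] : #|S| == 2%N.
  by rewrite -(eqn_pmul2r (isT : (0 < 2)%N)); apply/eqP; exact: esym c1.
case: hS => S0 HS; rewrite /zs Sxy big_setU1 ?inE // big_set1 => /eqP.
rewrite addr_eq0 => /eqP yx.
have nx : x != 0 by apply: contra S0 => /eqP <-; rewrite Sxy !inE eqxx.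
have yx' : - x = y by rewrite yx opprK.
by move: (HS x nx); rewrite Sxy !inE yx' !eqxx !orbT.
Qed.

Lemma sum_disjU (G : finZmodType) (A B : {set G}) (F : G -> G) : [disjoint A & B] ->
  \sum_(x in A :|: B) F x = \sum_(x in A) F x + \sum_(x in B) F x.
Proof. by move=> dAB; rewrite -bigU //; apply: eq_bigl => x; rewrite !inE. Qed.

Lemma mulrn_modp (G : zmodType) (x : G) p n : x *+ p = 0 -> x *+ (n %% p) = x *+ n.
Proof.
by move=> xp; rewrite {2}(divn_eq n p) mulrnDr mulnC mulrnA xp mul0rn add0r.
Qed.

Lemma odd_kill (G : zmodType) (y : G) m : odd m -> y *+ m = 0 -> y + y = 0 -> y = 0.
Proof.
move=> om ym yy.
have e : m.+1 = (2 * (m.+1)./2)%N.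
  by rewrite -[LHS]odd_double_half /= om /= mul2n.
have h : y = y *+ m.+1 by rewrite mulrSr ym add0r.
by rewrite h e mulrnA mulr2n yy mul0rn.
Qed.

Section Ext.
End Ext.

Lemma ext_ind (G : finZmodType) (H : {set G}) :
  0 \in H -> (forall x y, x \in H -> y \in H -> x - y \in H) ->
  (forall x : G, x *+ #|H| = 0) -> odd #|H| -> \sum_(h in H) h = 0 ->
  forall k (X : {set G}), (#|X| <= k)%N -> (forall x, x \in X -> x \notin H) ->
  (forall x h, x \in X -> h \in H -> x + h \in X) -> (forall x, x \in X -> - x \in X) ->
  exists Y : {set G}, Y \subset X /\ (forall x, x \in X -> (x \in Y) = (- x \notin Y))
     /\ \sum_(y in Y) y = 0.
Proof.
move=> H0 HB Hex Hodd HS.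
have HN : forall x, x \in H -> - x \in H by move=> x xH; rewrite -sub0r HB.
have HD : forall x y, x \in H -> y \in H -> x + y \in H.
  by move=> x y xH yH; rewrite -[y]opprK HB ?HN.
have HM : forall x n, x \in H -> x *+ n \in H.
  by move=> x n xH; elim: n => [|n IH]; rewrite ?mulr0n // mulrS HD.
have H2 : forall x, x + x \in H -> x \in H.
  move=> x xx.
  have e : (#|H|.+1 = 2 * (#|H|.+1)./2)%N.
    by rewrite -[LHS]odd_double_half /= Hodd /= mul2n.
  have -> : x = (x + x) *+ (#|H|.+1)./2.
    by rewrite -mulr2n -mulrnA -e mulrSr Hex add0r.
  exact: HM.
elim=> [|k IH] X cX XH XD XN.
  exists set0; rewrite sub0set big_set0; split=> //; split=> // x.
  by move: cX; rewrite leqn0 => /eqP/cards0_eq ->; rewrite inE.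
case: (set_0Vmem X) => [->|[x xX]].
  by exists set0; rewrite sub0set big_set0; split=> //; split=> // z; rewrite inE.
pose C := [set y | y - x \in H]; pose D := [set y | y + x \in H].
have memC : forall y, (y \in C) = (y - x \in H) by move=> y; rewrite inE.
have memD : forall y, (y \in D) = (y + x \in H) by move=> y; rewrite inE.
clearbody C D.
pose X' := X :\: (C :|: D).
have xC : x \in C by rewrite memC subrr.
have CX : C \subset X.
  by apply/subsetP => y; rewrite memC => yH; rewrite -(subrK x y) addrC XD.
have DX : D \subset X.
  apply/subsetP => y; rewrite memD => yH; rewrite -[y]opprK XN //.
  by rewrite -[- y](subrK x) addrC XD // -opprD HN.
have CD : forall y, y \in C -> y \in D -> False.
  move=> y; rewrite memC memD => y1 y2; have := HB _ _ y2 y1.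
  have -> : (y + x) - (y - x) = x + x by rewrite opprB addrC addrA subrK.
  move=> /H2 xH.
  by move: (XH x xX); rewrite xH.
have Cneg : forall y, (- y \in D) = (y \in C).
  by move=> y; rewrite memC memD addrC -opprB; apply/idP/idP => /HN; rewrite ?opprK.
have Dneg : forall y, (- y \in C) = (y \in D).
  by move=> y; rewrite -Cneg opprK.
have cX' : (#|X'| <= k)%N.
  have : X' \subset X :\ x.
    apply/subsetP => y; rewrite !inE => /andP [/norP [yC yD] ->]; rewrite andbT.
    by apply: contra yC => /eqP ->.
  move/subset_leq_card; rewrite (cardsD1 x X) xX /= add1n in cX.
  by move=> h; apply: leq_trans h _.
have X'H : forall y, y \in X' -> y \notin H.
  by move=> y; rewrite inE => /andP [_ /XH].
have X'D : forall y h, y \in X' -> h \in H -> y + h \in X'.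
  move=> y h; rewrite !inE => /andP [/norP [yC yD] yX] hH.
  rewrite XD // andbT; apply/norP; split.
  - apply: contra yC => yh; rewrite memC; rewrite memC in yh.
    have e : y - x = y + h - x - h by rewrite addrAC addrK.
    by rewrite e; exact: HB.
  - apply: contra yD => yh; rewrite memD; rewrite memD in yh.
    have e : y + x = y + h + x - h by rewrite addrAC addrK.
    by rewrite e; exact: HB.
have X'N : forall y, y \in X' -> - y \in X'.
  move=> y; rewrite !inE => /andP [/norP [yC yD] yX].
  by rewrite XN // andbT Dneg Cneg (negbTE yC) (negbTE yD).
have [Y' [Y'X [Y'P Y'S]]] := IH X' cX' X'H X'D X'N.
have Y'C : forall y, y \in Y' -> y \notin C.
  by move=> y /(subsetP Y'X); rewrite !inE => /andP [/norP [] ].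
have Y'D : forall y, y \in Y' -> y \notin D.
  by move=> y /(subsetP Y'X); rewrite !inE => /andP [/norP [] ].
exists (Y' :|: C); split; [|split].
- rewrite subUset CX andbT; apply: subset_trans Y'X _; exact: subsetDl.
- move=> z zX; rewrite !inE.
  case zC: (z \in C).
    rewrite orbT; apply/esym/negP => /orP [/Y'D|]; rewrite ?Cneg ?zC //.
    by move=> nzC; apply: (CD (- z)) => //; rewrite Cneg.
  case zD: (z \in D).
    rewrite orbF; have -> : (z \in Y') = false by apply/negP => /Y'D; rewrite zD.
    by rewrite Dneg zD orbT.
  have zX' : z \in X' by rewrite !inE zC zD zX.
  have -> : (- z \in C) = false by rewrite Dneg zD.
  by rewrite orbF orbF Y'P.
- rewrite sum_disjU; last first.
    by rewrite -setI_eq0; apply/eqP/setP => y; rewrite !inE;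
      apply/negP => /andP [/Y'C /negP yC yC'].
  rewrite Y'S add0r.
  have -> : C = [set h + x | h in H].
    apply/setP => y; rewrite memC; apply/idP/imsetP => [yH|[h hH ->]].
      by exists (y - x); rewrite ?subrK.
    by rewrite addrK.
  rewrite big_imset /=; last by move=> h h' _ _; apply: addIr.
  by rewrite big_split /= HS sumr_const Hex add0r.
Qed.

Lemma ext_main (G : finZmodType) (H T : {set G}) :
  0 \in H -> (forall x y, x \in H -> y \in H -> x - y \in H) ->
  (forall x : G, x *+ #|H| = 0) -> odd #|H| ->
  T \subset H -> 0 \notin T -> (forall x, x \in H -> x != 0 -> (x \in T) = (- x \notin T)) ->
  \sum_(x in T) x = 0 -> exists S : {set G}, hs S /\ zs S.
Proof.
move=> H0 HB Hex Hodd TH T0 HT ST.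
have HN : forall x, x \in H -> - x \in H by move=> x xH; rewrite -sub0r HB.
have sH : \sum_(h in H) h = 0.
  apply: (odd_kill Hodd (Hex _)); apply/eqP; rewrite addr_eq0; apply/eqP.
  rewrite -sumrN (reindex_inj oppr_inj) /=; apply: eq_big => [h|h _] //.
  by apply/idP/idP => /HN; rewrite ?opprK.
have XH : forall x, x \in ~: H -> x \notin H by move=> x; rewrite inE.
have XD : forall x h, x \in ~: H -> h \in H -> x + h \in ~: H.
  move=> x h; rewrite !inE => xH hH; apply: contra xH => xhH.
  by rewrite -(addrK h x); apply: HB.
have XN : forall x, x \in ~: H -> - x \in ~: H.
  move=> x; rewrite !inE => xH; apply: contra xH => /HN; by rewrite opprK.
have [Y [YX [YP YS]]] := ext_ind H0 HB Hex Hodd sH (leqnn #|~: H|) XH XD XN.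
have {YX} YX : forall y, y \in Y -> y \notin H.
  by move=> y /(subsetP YX); rewrite inE.
have {YP} YP : forall x, x \notin H -> (x \in Y) = (- x \notin Y).
  by move=> x xH; apply: YP; rewrite inE.
have TH' : forall x, x \in T -> x \in H by move=> x /(subsetP TH).
exists (T :|: Y); split; [split|].
- rewrite inE negb_or T0 /=; apply/negP => /YX; by rewrite H0.
- move=> x nx; rewrite !inE.
  case xH: (x \in H).
  + have nxH : - x \in H by apply: HN.
    have -> : (x \in Y) = false by apply/negP => /YX; rewrite xH.
    have -> : (- x \in Y) = false by apply/negP => /YX; rewrite nxH.
    by rewrite !orbF HT.
  + have nxH : - x \notin H by apply/negP => /HN; rewrite opprK xH.
    have -> : (x \in T) = false by apply/negP => /TH'; rewrite xH.
    have -> : (- x \in T) = false by apply/negP => /TH'; move/negP: nxH.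
    by rewrite /= YP ?xH.
- rewrite /zs sum_disjU ?ST ?YS ?addr0 //.
  rewrite -setI_eq0; apply/eqP/setP => y; rewrite !inE.
  by apply/negP => /andP [/TH' yH /YX]; rewrite yH.
Qed.

Lemma ext_inj (G K : finZmodType) (f : K -> G) (T0 : {set K}) :
  injective f -> {morph f : x y / x + y} -> (forall x : G, x *+ #|K| = 0) ->
  hs T0 -> zs T0 -> exists S : {set G}, hs S /\ zs S.
Proof.
move=> finj fD Hex hT zT.
have f0 := morph0 fD; have fN := morphN fD.
have memf : forall (A : {set K}) x, (f x \in f @: A) = (x \in A).
  by move=> A x; rewrite mem_imset.
have cH : #|[set f u | u in [set: K]]| = #|K| by rewrite card_imset // cardsT.
case: (hT) => T0n HT.
apply: (@ext_main G [set f u | u in [set: K]] (f @: T0)).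
- by rewrite -f0 memf inE.
- move=> x y /imsetP [u _ ->] /imsetP [v _ ->]; rewrite -fN -fD memf inE //.
- by rewrite cH.
- by rewrite cH (hs_card hT) /= muln2 odd_double.
- by apply: imsetS; apply: subsetT.
- by rewrite -f0 memf.
- move=> x /imsetP [u _ ->] nx; rewrite -fN !memf; apply: HT.
  by apply: contra nx => /eqP ->; rewrite f0.
- rewrite big_imset /=; last by move=> ? ? _ _; apply: finj.
  by rewrite -morph_sum // zT f0.
Qed.

Lemma morphMn (A B : zmodType) (f : A -> B) : {morph f : x y / x + y} ->
  forall x n, f (x *+ n) = f x *+ n.
Proof.
move=> fD x; elim=> [|n IH]; first by rewrite !mulr0n (morph0 fD).
by rewrite !mulrS fD IH.
Qed.

Lemma inj_of_ker (A B : zmodType) (f : A -> B) : {morph f : x y / x + y} ->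
  (forall x, f x = 0 -> x = 0) -> injective f.
Proof.
move=> fD fk x y e; apply/eqP; rewrite -subr_eq0; apply/eqP/fk.
by rewrite fD (morphN fD) e subrr.
Qed.

Definition InvHyp (p : nat) := forall i, (0 < i < p)%N -> exists j, ((i * j) %% p = 1)%N.

Lemma inv3 : InvHyp 3.
Proof. by move=> [|[|[|i]]] //= _; [exists 1%N|exists 2%N]. Qed.
Lemma inv5 : InvHyp 5.
Proof.
by move=> [|[|[|[|[|i]]]]] //= _; [exists 1%N|exists 3%N|exists 2%N|exists 4%N].
Qed.

Lemma kill_inv (G : zmodType) (c : G) q i : InvHyp q.+2 -> c *+ q.+2 = 0 ->
  (0 < i < q.+2)%N -> exists j, c = c *+ i *+ j.
Proof.
move=> iv cq /iv [j ij]; exists j.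
by rewrite -mulrnA -(mulrn_modp _ cq) ij.
Qed.

Lemma base_zp (G : zmodType) q (a : G) : a *+ q.+2 = 0 -> a != 0 -> InvHyp q.+2 ->
  injective (fun i : 'Z_(q.+2) => a *+ i) /\ {morph (fun i : 'Z_(q.+2) => a *+ i) : x y / x + y}.
Proof.
move=> aq a0 iv.
have fD : {morph (fun i : 'Z_(q.+2) => a *+ i) : x y / x + y}.
  by move=> x y /=; rewrite mulrn_modp // mulrnDr.
split=> //; apply: inj_of_ker => // i /= ai.
apply: val_inj => /=; apply/eqP; apply: contraT => i0.
have hi : (0 < i < q.+2)%N by rewrite lt0n i0 /=; exact: ltn_ord i.
have [j aj] := kill_inv iv aq hi.
by move: a0; rewrite aj ai mul0rn eqxx.
Qed.

Definition extf (G K : zmodType) q (c : G) (f : K -> G) (w : 'Z_(q.+2) * K) : G :=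
  c *+ (w.1 : nat) + f w.2.

Lemma ext_zp (G K : zmodType) q (c : G) (f : K -> G) :
  (forall x : G, x *+ q.+2 = 0) -> InvHyp q.+2 -> injective f ->
  {morph f : x y / x + y} -> (forall u, f u != c) ->
  injective (@extf G K q c f) /\ {morph @extf G K q c f : x y / x + y}.
Proof.
move=> Hq iv finj fD fc.
have f0 := morph0 fD.
have eD : {morph @extf G K q c f : x y / x + y}.
  move=> [i u] [i' u']; rewrite /extf /= mulrn_modp // mulrnDr fD.
  by rewrite addrACA.
split=> //; apply: inj_of_ker => // -[i u]; rewrite /extf /= => e.
have i0 : i = 0.
  apply: val_inj => /=; apply/eqP; apply: contraT => i0.
  have hi : (0 < i < q.+2)%N by rewrite lt0n i0 /=; exact: ltn_ord i.
  have [j cj] := kill_inv iv (Hq c) hi.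
  have : c *+ i = f (- u) by rewrite (morphN fD); apply/eqP; rewrite -addr_eq0 e.
  move=> h; move: (fc ((- u) *+ j)); rewrite (morphMn fD) -h -cj eqxx //.
move: e; rewrite i0 /= mulr0n add0r -f0 => /finj ->.
by [].
Qed.

Definition K3 := ('Z_3 * ('Z_3 * 'Z_3))%type.
HB.instance Definition _ := GRing.Zmodule.on K3.
HB.instance Definition _ := Finite.on K3.
Definition e3 (a b c : nat) : K3 := (inZp a, (inZp b, inZp c)).
Definition s3 : seq K3 := [:: e3 0 0 1; e3 0 1 0; e3 0 1 1; e3 0 1 2; e3 1 0 0;
  e3 1 0 1; e3 2 0 1; e3 1 1 0; e3 1 1 1; e3 2 2 1; e3 1 2 0; e3 2 1 2; e3 1 2 2].
Definition T3 : {set K3} := [set x | x \in s3].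

Lemma hs_T3 : hs T3 /\ zs T3.
Proof.
split; [split|].
- by rewrite inE; vm_compute.
- have h : forall x : K3, (x != 0) ==> ((x \in s3) == (- x \notin s3)).
    by case=> a [b c]; elim/Z3_ind: a; elim/Z3_ind: b; elim/Z3_ind: c; vm_compute.
  by move=> x nx; rewrite !in_set; apply/eqP; exact: (implyP (h x) nx).
- rewrite /zs (eq_bigl (mem s3)) => [|x]; last by rewrite inE.
  rewrite -big_uniq; last by vm_compute.
  by apply/eqP; rewrite unlock; vm_compute.
Qed.

Lemma card_K3 : #|{: K3}| = 27%N.
Proof. by rewrite !card_prod !card_ord. Qed.

Definition K5 := ('Z_5 * 'Z_5)%type.
HB.instance Definition _ := GRing.Zmodule.on K5.
HB.instance Definition _ := Finite.on K5.
Definition e5 (a b : nat) : K5 := (inZp a, inZp b).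
Definition s5 : seq K5 := [:: e5 0 1; e5 0 2; e5 1 0; e5 1 1; e5 1 2; e5 1 3; e5 4 1;
  e5 2 0; e5 2 1; e5 3 3; e5 3 2; e5 2 4].
Definition T5 : {set K5} := [set x | x \in s5].

Lemma hs_T5 : hs T5 /\ zs T5.
Proof.
split; [split|].
- by rewrite inE; vm_compute.
- have h : forall x : K5, (x != 0) ==> ((x \in s5) == (- x \notin s5)).
    by case=> a b; elim/Z5_ind: a; elim/Z5_ind: b; vm_compute.
  by move=> x nx; rewrite !in_set; apply/eqP; exact: (implyP (h x) nx).
- rewrite /zs (eq_bigl (mem s5)) => [|x]; last by rewrite inE.
  rewrite -big_uniq; last by vm_compute.
  by apply/eqP; rewrite unlock; vm_compute.
Qed.

Lemma card_K5 : #|{: K5}| = 25%N.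
Proof. by rewrite !card_prod !card_ord. Qed.

Lemma sumS_ge k : (k <= \sum_(i < k) i.+1)%N.
Proof. elim: k => [|k IH]; rewrite ?big_ord0 // big_ord_recr /=; lia. Qed.

Lemma sumS_ge2 k : (4 <= k)%N -> (2 * k + 1 <= \sum_(i < k) i.+1)%N.
Proof.
elim: k => [|k IH] //; rewrite ltnS leq_eqVlt => /orP [/eqP <-|hk].
  by rewrite !big_ord_recr big_ord0.
have h := IH hk.
have e : (\sum_(i < k.+1) i.+1 = \sum_(i < k) i.+1 + k.+1)%N by rewrite big_ord_recr.
rewrite e; lia.
Qed.

Lemma subsum k t : (t <= \sum_(i < k) i.+1)%N ->
  exists b : nat -> bool, (\sum_(i < k) (b i.+1) * i.+1)%N = t.
Proof.
elim: k t => [|k IH] t.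
  by rewrite big_ord0 leqn0 => /eqP ->; exists (fun _ => false); rewrite big_ord0.
have e : (\sum_(i < k.+1) i.+1 = \sum_(i < k) i.+1 + k.+1)%N by rewrite big_ord_recr.
rewrite e => ht.
case: (leqP t (\sum_(i < k) i.+1)) => [hs|hs].
- have [b hb] := IH t hs.
  exists (fun j => if j == k.+1 then false else b j).
  rewrite big_ord_recr /= eqxx mul0n addn0 -hb; apply: eq_bigr => i _ /=.
  by rewrite eqSS (ltn_eqF (ltn_ord i)).
- have hk := sumS_ge k.
  have [b hb] := IH (t - k.+1)%N (ltac:(lia)).
  exists (fun j => if j == k.+1 then true else b j).
  rewrite big_ord_recr /= eqxx mul1n.
  rewrite (eq_bigr (fun i : 'I_k => (b i.+1 * i.+1)%N)) ?hb; first lia.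
  by move=> i _ /=; rewrite eqSS (ltn_eqF (ltn_ord i)).
Qed.

Lemma cyc_case (G : finZmodType) (g : G) k : #[g]%g = (2*k+1)%N -> (3 <= k)%N ->
  (forall x : G, x *+ (2*k+1) = 0) -> exists S : {set G}, hs S /\ zs S.
Proof.
move=> og k3 Hex.
have F0 : forall n, (g *+ n == 0) = (2*k+1 %| n)%N.
  by move=> n; rewrite -og order_dvdn zmodXgE.
have F1 : forall i j, (i < 2*k+1)%N -> (j < 2*k+1)%N -> g *+ i = g *+ j -> i = j.
  move=> i j im jm e; have := eq_expg_mod_order g i j.
  by rewrite !zmodXgE e eqxx og => /esym/eqP; rewrite !modn_small.
have F2 : forall i j, (0 < i <= k)%N -> (0 < j <= k)%N -> g *+ i != - (g *+ j).
  move=> i j hi hj; rewrite -addr_eq0 -mulrnDr F0; apply/negP => h.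
  have hij : (0 < i + j)%N by lia.
  have := dvdn_leq hij h; lia.
have F3 : forall j, (0 < j <= k)%N -> g *+ j != 0.
  move=> j hj; rewrite F0; apply/negP => h.
  have hj0 : (0 < j)%N by lia.
  have := dvdn_leq hj0 h; lia.
pose s := (\sum_(i < k) i.+1)%N.
have ts : ((s * k.+1) %% (2*k+1) <= s)%N.
  case: (ltngtP k 3) => [|hk|ek]; first lia.
  - apply: leq_trans (ltnW (ltn_pmod _ _)) (sumS_ge2 hk); lia.
  - by rewrite /s ek !big_ord_recr big_ord0.
have [b hb] := subsum ts.
pose f j := if b j then - (g *+ j) else g *+ j.
pose T := [set f i.+1 | i : 'I_k].
have memT1 : forall j, (0 < j <= k)%N -> (g *+ j \in T) = ~~ b j.
  move=> j hj; apply/imsetP/idP => [[i _ e]|nb].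
  - move: e; rewrite /f; case bi: (b i.+1) => e.
    + have hi : (0 < i.+1 <= k)%N by rewrite /= ltn_ord.
      by move: (F2 j i.+1 hj hi); rewrite e eqxx.
    + have ik := ltn_ord i.
      have ji : j = i.+1 by apply: (F1 _ _ _ _ e); lia.
      by rewrite ji bi.
  - have hj' : (j.-1 < k)%N by lia.
    exists (Ordinal hj') => //; rewrite /f /= prednK ?(negbTE nb) //; lia.
have memT2 : forall j, (0 < j <= k)%N -> (- (g *+ j) \in T) = b j.
  move=> j hj; apply/imsetP/idP => [[i _ e]|nb].
  - move: e; rewrite /f; case bi: (b i.+1) => e.
    + have ik := ltn_ord i.
      have ji : j = i.+1 by apply: (F1 _ _ _ _ (oppr_inj e)); lia.
      by rewrite ji bi.
    + have hi : (0 < i.+1 <= k)%N by rewrite /= ltn_ord.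
      by move: (F2 i.+1 j hi hj); rewrite -e eqxx.
  - have hj' : (j.-1 < k)%N by lia.
    exists (Ordinal hj') => //; rewrite /f /= prednK ?nb //; lia.
have cH : #|<[g]>%g| = (2*k+1)%N by exact: og.
apply: (@ext_main G <[g]>%g T).
- exact: group1.
- by move=> x y xH yH; rewrite -zmodVgE -zmodMgE groupM ?groupV.
- by move=> x; rewrite cH.
- by rewrite cH addn1 /= mul2n odd_double.
- apply/subsetP => x /imsetP [i _ ->]; rewrite /f; case: (b _);
    rewrite ?(-zmodVgE) ?groupV -zmodXgE mem_cycle //.
- apply/imsetP => [[i _ e]]; move: e; rewrite /f.
  have hi : (0 < i.+1 <= k)%N by rewrite /= ltn_ord.
  by case: (b _) => /esym/eqP; rewrite ?oppr_eq0 (negbTE (F3 _ hi)).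
- move=> x /cyclePmin [i im ->]; rewrite zmodXgE => nx; rewrite og in im.
  have i0 : (0 < i)%N by rewrite lt0n; apply: contra nx => /eqP ->.
  case: (leqP i k) => ik.
  + by rewrite memT1 ?memT2 //; apply/andP.
  + have e : g *+ i = - (g *+ (2*k+1 - i)).
      by apply/eqP; rewrite -addr_eq0 -mulrnDr subnKC ?Hex // ltnW.
    have hj : (0 < 2*k+1 - i <= k)%N by lia.
    by rewrite e opprK memT2 ?memT1 ?negbK.
- rewrite big_imset /=; last first.
    move=> i i' _ _; rewrite /f.
    have hi : (0 < i.+1 <= k)%N by rewrite /= ltn_ord.
    have hi' : (0 < i'.+1 <= k)%N by rewrite /= ltn_ord.
    have ltm : forall j : 'I_k, (j.+1 < 2*k+1)%N by move=> j; have := ltn_ord j; lia.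
    case: (b _); case: (b _) => e.
    + by apply: val_inj; have [] := F1 _ _ (ltm i) (ltm i') (oppr_inj e).
    + by move: (F2 _ _ hi' hi); rewrite -e eqxx.
    + by move: (F2 _ _ hi hi'); rewrite e eqxx.
    + by apply: val_inj; have [] := F1 _ _ (ltm i) (ltm i') e.
  have fE : forall j, f j = g *+ j - g *+ (2 * (b j * j))%N.
    move=> j; rewrite /f; case: (b j).
    - by rewrite mul1n mul2n -addnn mulrnDr opprD addrA subrr add0r.
    - by rewrite mul0n muln0 mulr0n subr0.
  under eq_bigr do rewrite fE.
  rewrite sumrB !sumrMnr.
  have key : (s %% (2*k+1) = (\sum_(i < k) 2 * (b i.+1 * i.+1)) %% (2*k+1))%N.
    rewrite -big_distrr /= hb modnMmr.
    have -> : (2 * (s * k.+1) = s * (2*k+1) + s)%N by ring.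
    by rewrite modnMDl.
  apply/eqP; rewrite subr_eq0; apply/eqP.
  rewrite -(mulrn_modp _ (Hex g)) -[RHS](mulrn_modp _ (Hex g)).
  exact: (congr1 (fun n => g *+ n) key).
Qed.

Lemma iso_of_bij (G : finZmodType) (H : zmodType) (f : H -> G) :
  bijective f -> {morph f : x y / x + y} -> zmod_iso G H.
Proof.
move=> [g fg gf] fD; exists g; split; first by exists f.
by move=> x y; rewrite -{1}(gf x) -{1}(gf y) -fD fg.
Qed.

Lemma outside (G : finZmodType) (K : finType) (f : K -> G) :
  (#|K| < #|G|)%N -> exists c, forall u, f u != c.
Proof.
move=> cK.
have : ~~ ([set: G] \subset [set f u | u in [set: K]]).
  apply/negP => h; have := subset_leq_card h.
  have := leq_imset_card f [set: K]; rewrite !cardsT => h1 h2.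
  have := leq_trans h2 h1; rewrite leqNgt cK //.
case/subsetPn => c _ nc; exists c => u; apply: contra nc => /eqP <-.
by apply: imset_f; rewrite inE.
Qed.

Lemma construct (G : finZmodType) (n : nat) :
  #|G| = (2 * n + 1)%N -> (3 <= #|G|)%N ->
  ~ [\/ zmod_iso G 'Z_3, zmod_iso G 'Z_5 | zmod_iso G ('Z_3 * 'Z_3)%type] ->
  exists S : {set G}, hs S /\ zs S.
Proof.
move=> cG c3 Hn.
have [g _ eg] := exponent_witness (abelian_nil (zmod_abelian [set: G])).
have Hex : forall x : G, x *+ #[g]%g = 0.
  by move=> x; rewrite -eg -zmodXgE expg_exponent // inE.
have oddG : odd #|G| by rewrite cG addn1 /= mul2n odd_double.
have oddm : odd #[g]%g.
  by apply: (dvdn_odd _ oddG); rewrite -cardsT; apply: order_dvdG; rewrite inE.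
have em : #[g]%g = (2 * (#[g]%g)./2 + 1)%N.
  by rewrite -[LHS]odd_double_half oddm add1n mul2n addn1.
move: (#[g]%g)./2 em => k em; rewrite em in Hex.
have g0 : g != 0.
  apply/negP => /eqP g0; move: em; rewrite g0.
  have -> : #[0 : G]%g = 1%N by apply/eqP; rewrite order_eq1.
  move=> e1; have k0 : k = 0%N by lia.
  move: Hex; rewrite k0 => H1.
  have : [set: G] = [set 0].
    by apply/setP => x; rewrite !inE; move: (H1 x); rewrite mulr1n => ->; apply/esym/eqP.
  move=> e; have := congr1 (fun A : {set G} => #|A|) e; rewrite /= cardsT cards1 => c1.
  by move: c3; rewrite c1.
case: k em Hex => [|[|[|k]]] em Hex.
- by move: g0; rewrite -order_eq1 em.
-
  have [f1inj f1D] := base_zp (q := 1) (Hex g) g0 inv3.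
  case: (eqVneq #|G| 3%N) => [c3'|n3].
    case: Hn; constructor 1; apply: (iso_of_bij _ f1D).
    by apply: inj_card_bij f1inj _; rewrite card_ord c3'.
  have [c1 hc1] : exists c, forall u : 'Z_3, g *+ u != c.
    apply: outside; rewrite card_ord; change (3 < #|G|)%N.
    by rewrite ltn_neqAle eq_sym n3 /=.
  have [f2inj f2D] := ext_zp (q := 1) Hex inv3 f1inj f1D hc1.
  have c9 : (9 <= #|G|)%N.
    by have := leq_card _ f2inj; rewrite card_prod !card_ord.
  case: (eqVneq #|G| 9%N) => [c9'|n9].
    case: Hn; constructor 3; apply: (iso_of_bij _ f2D).
    by apply: inj_card_bij f2inj _; rewrite card_prod !card_ord c9'.
  have lt9 : (#|{: 'Z_3 * 'Z_3}| < #|G|)%N.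
    rewrite card_prod !card_ord (_ : ((Zp_trunc 3).+2 * (Zp_trunc 3).+2 = 9)%N) //.
    by rewrite ltn_neqAle eq_sym n9.
  have [c2 hc2] := outside (extf c1 (fun i : 'Z_3 => g *+ i)) lt9.
  have [f3inj f3D] := ext_zp (q := 1) Hex inv3 f2inj f2D hc2.
  apply: (@ext_inj G K3 _ T3 f3inj f3D _ hs_T3.1 hs_T3.2).
  have h3 : forall y : G, y *+ 3 = 0 := Hex.
  by move=> x; rewrite card_K3 (mulrnA x 3 9) h3 mul0rn.
-
  have [f1inj f1D] := base_zp (q := 3) (Hex g) g0 inv5.
  case: (eqVneq #|G| 5%N) => [c5'|n5].
    case: Hn; constructor 2; apply: (iso_of_bij _ f1D).
    by apply: inj_card_bij f1inj _; rewrite card_ord c5'.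
  have [c1 hc1] : exists c, forall u : 'Z_5, g *+ u != c.
    apply: outside; rewrite card_ord.
    have h5 : (5 %| #|G|)%N.
      have : (#[g]%g %| #|G|)%N by rewrite -cardsT; apply: order_dvdG; rewrite inE.
      by rewrite em.
    have : (5 <= #|G|)%N by apply: dvdn_leq; lia.
    by move=> h; rewrite ltn_neqAle eq_sym n5 h.
  have [f2inj f2D] := ext_zp (q := 3) Hex inv5 f1inj f1D hc1.
  apply: (@ext_inj G K5 _ T5 f2inj f2D _ hs_T5.1 hs_T5.2).
  have h5 : forall y : G, y *+ 5 = 0 := Hex.
  by move=> x; rewrite card_K5 (mulrnA x 5 5) h5.
- apply: (cyc_case (k := k.+3)) => //; last by rewrite -em.
Qed.

Unset Implicit Arguments.
Theorem mainTheorem17 (G : finZmodType) (n : nat) :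
  #|G| = (2 * n + 1)%N -> (3 <= #|G|)%N ->
  (exists A : 'M[option G]_(2, n),
      zs_magic_pfa G [set x : G | x != 0] 2 n n 2 A)
  <-> ~ [\/ zmod_iso G 'Z_3, zmod_iso G 'Z_5 | zmod_iso G ('Z_3 * 'Z_3)%type].
Proof.
move=> cG c3; split.
- move=> [A hA] hiso; have [S [hS zS]] := arr_hs cG hA.
  case: hiso => [[f [fb fD]]|[f [fb fD]]|[f [fb fD]]].
  + have := bij_eq_card fb; rewrite card_ord => c.
    exact: (no_hs_card3 c hS zS).
  + have := bij_eq_card fb; rewrite card_ord => c.
    exact: (no_hs_card5 c hS zS).
  + have [hS' zS'] := @hs_transport G K2 f S fb fD hS zS.
    exact: (no_hs33 hS' zS').
- move=> Hn; have [S [hS zS]] := construct cG c3 Hn.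
  have cS := hs_card hS.
  have nS : n = #|S|.
    have : (2 * n + 1 = (#|S| * 2).+1)%N by rewrite -cG.
    lia.
  by rewrite nS; exact: hs_arr hS zS.
Qed.
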